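(* Let $(X,d_X)$ and $(Y,d_Y)$ be ultrametric spaces and let $d$ be a partial distance-preserving metric on $X\times Y$ with $d_\infty\le d$. Suppose that $d((x_1,y_1),(x_2,y_2))=d((x_2,y_1),(x_1,y_2))$ for all $x_1,x_2\in X$ and $y_1,y_2\in Y$. Then $(X\times Y,d)$ is ultrametric if and only if $\mathcal N_\varepsilon(W\times Z)=\mathcal N_\varepsilon(W)\cdot\mathcal N_\varepsilon(Z)$ for all compact sets $W\subseteq X$, $Z\subseteq Y$ and every $\varepsilon>0$ (quantities computed in $(X,d_X)$, $(Y,d_Y)$, $(X\times Y,d)$ respectively).
   Context: $d_\infty((x_1,y_1),(x_2,y_2))=\max\{d_X(x_1,x_2),d_Y(y_1,y_2)\}$. A metric $d$ on $X\times Y$ is partial distance-preserving if $d((x_1,y),(x_2,y))=d_X(x_1,x_2)$ and $d((x,y_1),(x,y_2))=d_Y(y_1,y_2)$ for all $x,x_1,x_2\in X$, $y,y_1,y_2\in Y$. Ultrametric: $\rho(a,b)\le\max\{\rho(a,c),\rho(c,b)\}$. In a metric space $(M,\rho)$ with closed balls $B(c,r)=\{x:\rho(x,c)\le r\}$, $C$ is an $\varepsilon$-net for $V$ if $V\subseteq\bigcup_{c\in C}B(c,\varepsilon)$, and for totally bounded $V$ the covering number $\mathcal N_\varepsilon(V)$ is the smallest cardinality of a subset of $V$ that is an $\varepsilon$-net for $V$. *)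

(* Defs.v *)
From Stdlib Require Import Reals List Classical ClassicalEpsilon.
Open Scope R_scope.

Definition is_metric {T : Type} (d : T -> T -> R) : Prop :=
  (forall x y, 0 <= d x y) /\
  (forall x y, d x y = 0 <-> x = y) /\
  (forall x y, d x y = d y x) /\
  (forall x y z, d x z <= d x y + d y z).

Definition is_ultrametric {T : Type} (d : T -> T -> R) : Prop :=
  forall a b c, d a b <= Rmax (d a c) (d c b).

Definition d_inf {X Y : Type} (dX : X -> X -> R) (dY : Y -> Y -> R)
  (p q : X * Y) : R := Rmax (dX (fst p) (fst q)) (dY (snd p) (snd q)).

Definition partial_distance_preserving {X Y : Type} (dX : X -> X -> R)
  (dY : Y -> Y -> R) (d : X * Y -> X * Y -> R) : Prop :=
  (forall x1 x2 y, d (x1, y) (x2, y) = dX x1 x2) /\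
  (forall x y1 y2, d (x, y1) (x, y2) = dY y1 y2).

Definition closed_ball {T : Type} (d : T -> T -> R) (c : T) (r : R) (x : T) : Prop :=
  d x c <= r.

Definition is_open {T : Type} (d : T -> T -> R) (U : T -> Prop) : Prop :=
  forall x, U x -> exists r, 0 < r /\ forall y, d x y < r -> U y.

Definition metric_compact {T : Type} (d : T -> T -> R) (K : T -> Prop) : Prop :=
  forall (I : Type) (U : I -> T -> Prop),
    (forall i, is_open d (U i)) ->
    (forall x, K x -> exists i, U i x) ->
    exists l : list I, forall x, K x -> exists i, In i l /\ U i x.

Definition has_net_of_card {T : Type} (d : T -> T -> R) (V : T -> Prop)
  (eps : R) (n : nat) : Prop :=
  exists C : list T, NoDup C /\ length C = n /\ (forall c, In c C -> V c) /\
    (forall v, V v -> exists c, In c C /\ closed_ball d c eps v).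

Definition is_covering_number {T : Type} (d : T -> T -> R) (V : T -> Prop)
  (eps : R) (n : nat) : Prop :=
  has_net_of_card d V eps n /\ (forall m, has_net_of_card d V eps m -> (n <= m)%nat).

(* Covering number N_eps(V) (meaningful when V is totally bounded, where the
   minimum exists; chosen via classical epsilon). *)
Definition covering_number {T : Type} (d : T -> T -> R) (V : T -> Prop)
  (eps : R) : nat :=
  epsilon (inhabits 0%nat) (is_covering_number d V eps).

Definition setX {X Y : Type} (W : X -> Prop) (Z : Y -> Prop) (p : X * Y) : Prop :=
  W (fst p) /\ Z (snd p).

(* Main.v *)
Require Import Defs.
From Stdlib Require Import Reals List.
From Stdlib Require Import Classical ClassicalEpsilon Lra Lia Wf_nat.
Open Scope R_scope.

Definition dec_eq {A : Type} : forall x y : A, {x = y} + {x <> y} :=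
  fun x y => excluded_middle_informative (x = y).

Lemma min_exists (P : nat -> Prop) k : P k ->
  exists n, P n /\ forall m, P m -> (n <= m)%nat.
Proof.
  revert k. induction k as [k IH] using lt_wf_ind. intro Hk.
  destruct (classic (exists m, (m < k)%nat /\ P m)) as [[m [Hm Pm]]|Hn].
  - exact (IH m Hm Pm).
  - exists k. split; auto. intros m Pm.
    destruct (Nat.lt_ge_cases m k); auto. exfalso; apply Hn; eauto.
Qed.

Lemma cov_spec {T} (d : T -> T -> R) V eps k : has_net_of_card d V eps k ->
  is_covering_number d V eps (covering_number d V eps).
Proof.
  intro H. unfold covering_number. apply epsilon_spec.
  destruct (min_exists _ _ H) as [n [H1 H2]]. exists n; split; auto.
Qed.

Lemma cov_unique {T} (d : T -> T -> R) V eps n m :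
  is_covering_number d V eps n -> is_covering_number d V eps m -> n = m.
Proof.
  intros [A B] [C D]. apply Nat.le_antisymm; auto.
Qed.

Lemma list_net {T} (d : T -> T -> R) V eps (L : list T) :
  (forall c, In c L -> V c) ->
  (forall v, V v -> exists c, In c L /\ closed_ball d c eps v) ->
  has_net_of_card d V eps (length (nodup dec_eq L)) /\
  (length (nodup dec_eq L) <= length L)%nat.
Proof.
  intros H1 H2. split.
  - exists (nodup dec_eq L). split; [apply NoDup_nodup|split; [reflexivity|split]].
    + intros c Hc. apply H1. apply (nodup_In dec_eq). exact Hc.
    + intros v Hv. destruct (H2 v Hv) as [c [Hc Hb]]. exists c. split; auto.
      apply (nodup_In dec_eq). exact Hc.
  - apply NoDup_incl_length. apply NoDup_nodup.
    intros x Hx. apply (nodup_In dec_eq). exact Hx.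
Qed.

Lemma compact_net {T} (d : T -> T -> R) (hd : is_metric d) W eps :
  metric_compact d W -> 0 < eps -> exists k, has_net_of_card d W eps k.
Proof.
  intros Hcp He. destruct hd as [h0 [h1 [hs ht]]].
  destruct (Hcp {c : T | W c} (fun i y => d (proj1_sig i) y < eps)) as [l Hl].
  - intros i x Hx. exists (eps - d (proj1_sig i) x). split; [lra|].
    intros y Hy. pose proof (ht (proj1_sig i) x y). lra.
  - intros x Hx. exists (exist _ x Hx). simpl. rewrite (proj2 (h1 x x) eq_refl). lra.
  - exists (length (nodup dec_eq (map (@proj1_sig _ _) l))).
    apply list_net.
    + intros c Hc. apply in_map_iff in Hc. destruct Hc as [[x Hx] [<- _]]. exact Hx.
    + intros v Hv. destruct (Hl v Hv) as [i [Hi Hu]]. exists (proj1_sig i).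
      split. apply in_map; auto. unfold closed_ball. rewrite hs. lra.
Qed.

Lemma separated {T} (d : T -> T -> R) (hd : is_metric d) (hu : is_ultrametric d)
  V eps n C :
  NoDup C -> length C = n -> (forall c, In c C -> V c) ->
  (forall v, V v -> exists c, In c C /\ closed_ball d c eps v) ->
  (forall m, has_net_of_card d V eps m -> (n <= m)%nat) ->
  forall a b, In a C -> In b C -> d a b <= eps -> a = b.
Proof.
  intros HN HL HV Hcov Hmin a b Ha Hb Hab.
  destruct hd as [h0 [h1 [hs ht]]].
  apply NNPP. intro Hne.
  destruct (list_net d V eps (remove dec_eq b C)) as [Hn Hle].
  - intros c Hc. apply in_remove in Hc. apply HV; tauto.
  - intros v Hv. destruct (Hcov v Hv) as [c [Hc Hcb]].
    destruct (dec_eq c b) as [->|Hcb'].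
    + exists a. split. apply in_in_remove; auto.
      unfold closed_ball in *. pose proof (hu v a b). rewrite (hs b a) in H.
      pose proof (Rmax_lub _ _ _ Hcb Hab). lra.
    + exists c. split; auto. apply in_in_remove; auto.
  - pose proof (Hmin _ Hn). pose proof (remove_length_lt dec_eq C b Hb). lia.
Qed.

Lemma nodup_map_inj {A B} (f : A -> B) (l : list A) : NoDup l ->
  (forall a b, In a l -> In b l -> f a = f b -> a = b) -> NoDup (map f l).
Proof.
  induction l as [|x l IH]; intros HN Hi; simpl. constructor.
  inversion HN; subst. constructor.
  - intro Hin. apply in_map_iff in Hin. destruct Hin as [y [Hy Hyl]].
    assert (y = x) by (apply Hi; simpl; auto). subst. contradiction.
  - apply IH; auto. intros a b Ha Hb. apply Hi; simpl; auto.
Qed.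

Lemma nodup_prod {A B} (l : list A) (l' : list B) : NoDup l -> NoDup l' ->
  NoDup (list_prod l l').
Proof.
  induction l as [|x l IH]; intros H1 H2; simpl. constructor.
  inversion H1; subst. apply NoDup_app.
  - apply nodup_map_inj; auto. intros a b _ _ E. inversion E; auto.
  - apply IH; auto.
  - intros a Ha Hb. apply in_map_iff in Ha. destruct Ha as [y [<- _]].
    apply in_prod_iff in Hb. tauto.
Qed.

Lemma um_inf {X Y} (dX : X -> X -> R) (dY : Y -> Y -> R) :
  is_ultrametric dX -> is_ultrametric dY -> is_ultrametric (d_inf dX dY).
Proof.
  intros hX hY a b c. unfold d_inf.
  pose proof (hX (fst a) (fst b) (fst c)). pose proof (hY (snd a) (snd b) (snd c)).
  pose proof (Rmax_l (dX (fst a) (fst c)) (dY (snd a) (snd c))).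
  pose proof (Rmax_r (dX (fst a) (fst c)) (dY (snd a) (snd c))).
  pose proof (Rmax_l (dX (fst c) (fst b)) (dY (snd c) (snd b))).
  pose proof (Rmax_r (dX (fst c) (fst b)) (dY (snd c) (snd b))).
  set (M1 := Rmax (dX (fst a) (fst c)) (dY (snd a) (snd c))) in *.
  set (M2 := Rmax (dX (fst c) (fst b)) (dY (snd c) (snd b))) in *.
  pose proof (Rmax_l M1 M2). pose proof (Rmax_r M1 M2).
  apply Rmax_lub.
  - eapply Rle_trans; [exact H|]. apply Rmax_lub; lra.
  - eapply Rle_trans; [exact H0|]. apply Rmax_lub; lra.
Qed.

Theorem corollary4p8 (X Y : Type) (dX : X -> X -> R) (dY : Y -> Y -> R)
  (d : X * Y -> X * Y -> R)
  (hX : is_metric dX) (hXu : is_ultrametric dX)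
  (hY : is_metric dY) (hYu : is_ultrametric dY)
  (hd : is_metric d) (hpdp : partial_distance_preserving dX dY d)
  (hinf : forall p q, d_inf dX dY p q <= d p q)
  (hswap : forall x1 x2 y1 y2, d (x1, y1) (x2, y2) = d (x2, y1) (x1, y2)) :
  is_ultrametric d <->
  (forall (W : X -> Prop) (Z : Y -> Prop) (eps : R),
     metric_compact dX W -> metric_compact dY Z -> 0 < eps ->
     covering_number d (setX W Z) eps =
       (covering_number dX W eps * covering_number dY Z eps)%nat).
Proof.
  destruct hpdp as [pX pY].
  split.
  - intros hu.
    assert (Heq : forall p q, d p q = d_inf dX dY p q).
    { intros [x1 y1] [x2 y2]. apply Rle_antisym; [|apply hinf].
      pose proof (hu (x1, y1) (x2, y2) (x2, y1)). rewrite pX, pY in H.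
      unfold d_inf; simpl. exact H. }
    intros W Z eps HW HZ He.
    destruct (compact_net _ hX _ _ HW He) as [kW HkW].
    destruct (compact_net _ hY _ _ HZ He) as [kZ HkZ].
    pose proof (cov_spec _ _ _ _ HkW) as [[CW [NW [LW [VW CovW]]]] MW].
    pose proof (cov_spec _ _ _ _ HkZ) as [[CZ [NZ [LZ [VZ CovZ]]]] MZ].
    set (nW := covering_number dX W eps) in *.
    set (nZ := covering_number dY Z eps) in *.
    assert (Hprod : has_net_of_card d (setX W Z) eps (nW * nZ)).
    { exists (list_prod CW CZ). split; [apply nodup_prod; auto|].
      split; [rewrite length_prod; lia|]. split.
      - intros [a b] Hab. apply in_prod_iff in Hab. split; simpl; [apply VW|apply VZ]; tauto.
      - intros [x y] [Hx Hy]. simpl in Hx, Hy.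
        destruct (CovW x Hx) as [a [Ha Hxa]]. destruct (CovZ y Hy) as [b [Hb Hyb]].
        exists (a, b). split. apply in_prod_iff; auto.
        unfold closed_ball in *. rewrite Heq. unfold d_inf; simpl. apply Rmax_lub; auto. }
    pose proof (cov_spec _ _ _ _ Hprod) as [[C [NC [LC [VC CovC]]]] MC].
    pose proof (MC _ Hprod).
    set (n := covering_number d (setX W Z) eps) in *.
    apply Nat.le_antisymm; auto.
    set (f := fun q : X * Y => epsilon (inhabits q)
                 (fun c => In c C /\ closed_ball d c eps q)).
    assert (Hf : forall q, In q (list_prod CW CZ) -> In (f q) C /\ closed_ball d (f q) eps q).
    { intros [a b] Hq. apply epsilon_spec. apply CovC. apply in_prod_iff in Hq.
      split; simpl; [apply VW|apply VZ]; tauto. }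
    rewrite <- LC, <- LW, <- LZ, <- length_prod.
    rewrite <- (length_map f).
    apply NoDup_incl_length.
    + apply nodup_map_inj. apply nodup_prod; auto.
      intros [a b] [a' b'] Hq Hq' E.
      destruct (Hf _ Hq) as [_ B1]. destruct (Hf _ Hq') as [_ B2].
      rewrite E in B1. unfold closed_ball in *. rewrite Heq in B1, B2.
      unfold d_inf in B1, B2; simpl in B1, B2.
      apply in_prod_iff in Hq. apply in_prod_iff in Hq'.
      set (p := f (a', b')) in *.
      pose proof (Rmax_l (dX a (fst p)) (dY b (snd p))).
      pose proof (Rmax_r (dX a (fst p)) (dY b (snd p))).
      pose proof (Rmax_l (dX a' (fst p)) (dY b' (snd p))).
      pose proof (Rmax_r (dX a' (fst p)) (dY b' (snd p))).
      pose proof (proj1 (proj2 (proj2 hX))) as sX. pose proof (proj1 (proj2 (proj2 hY))) as sY.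
      f_equal.
      * apply (separated dX hX hXu W eps nW CW); try tauto; auto.
        pose proof (hXu a a' (fst p)). rewrite (sX (fst p) a') in H4.
        pose proof (Rmax_lub (dX a (fst p)) (dX a' (fst p)) eps ltac:(lra) ltac:(lra)). lra.
      * apply (separated dY hY hYu Z eps nZ CZ); try tauto; auto.
        pose proof (hYu b b' (snd p)). rewrite (sY (snd p) b') in H4.
        pose proof (Rmax_lub (dY b (snd p)) (dY b' (snd p)) eps ltac:(lra) ltac:(lra)). lra.
    + intros c Hc. apply in_map_iff in Hc. destruct Hc as [q [<- Hq]]. apply Hf; auto.
  - intros H.
    assert (Hle : forall p q, d p q <= d_inf dX dY p q).
    { intros [x1 y1] [x2 y2]. unfold d_inf; simpl.
      set (m := Rmax (dX x1 x2) (dY y1 y2)).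
      apply Rnot_lt_le. intro Hlt.
      destruct hX as [hX0 [hX1 [hXs _]]]. destruct hY as [hY0 [hY1 [hYs _]]].
      destruct hd as [hd0 [hd1 [hds _]]].
      assert (Hm : 0 < m).
      { destruct (Rle_lt_or_eq_dec 0 m) as [|E].
        - pose proof (hX0 x1 x2). pose proof (Rmax_l (dX x1 x2) (dY y1 y2)). unfold m; lra.
        - auto.
        - exfalso. pose proof (Rmax_l (dX x1 x2) (dY y1 y2)).
          pose proof (Rmax_r (dX x1 x2) (dY y1 y2)).
          pose proof (hX0 x1 x2). pose proof (hY0 y1 y2). fold m in H0, H1.
          assert (dX x1 x2 = 0) by lra. assert (dY y1 y2 = 0) by lra.
          apply hX1 in H4. apply hY1 in H5. subst.
          rewrite (proj2 (hd1 (x2, y2) (x2, y2)) eq_refl) in Hlt. lra. }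
      set (W := fun x => x = x1 \/ x = x2).
      set (Z := fun y => y = y1 \/ y = y2).
      assert (cW : metric_compact dX W).
      { intros I U _ Hc. destruct (Hc x1) as [i1 H1]. left; auto.
        destruct (Hc x2) as [i2 H2]. right; auto.
        exists (i1 :: i2 :: nil). intros x [->| ->]; [exists i1|exists i2]; simpl; auto. }
      assert (cZ : metric_compact dY Z).
      { intros I U _ Hc. destruct (Hc y1) as [i1 H1]. left; auto.
        destruct (Hc y2) as [i2 H2]. right; auto.
        exists (i1 :: i2 :: nil). intros x [->| ->]; [exists i1|exists i2]; simpl; auto. }
      assert (e1 : covering_number dX W m = 1%nat).
      { assert (HN : is_covering_number dX W m 1).
        { split.
          - exists (x1 :: nil). split. repeat constructor; simpl; tauto.
            split; auto. split. intros c [<-|[]]. left; auto.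
            intros v [-> | ->]; exists x1; split; simpl; auto; unfold closed_ball.
            + rewrite (proj2 (hX1 x1 x1) eq_refl). lra.
            + rewrite hXs. unfold m; apply Rmax_l.
          - intros k [C [_ [LC [_ Cov]]]]. destruct (Cov x1) as [c [Hc _]]. left; auto.
            destruct C; simpl in *; [contradiction|lia]. }
        apply (cov_unique _ _ _ _ _ (cov_spec _ _ _ _ (proj1 HN)) HN). }
      assert (e2 : covering_number dY Z m = 1%nat).
      { assert (HN : is_covering_number dY Z m 1).
        { split.
          - exists (y1 :: nil). split. repeat constructor; simpl; tauto.
            split; auto. split. intros c [<-|[]]. left; auto.
            intros v [-> | ->]; exists y1; split; simpl; auto; unfold closed_ball.
            + rewrite (proj2 (hY1 y1 y1) eq_refl). lra.
            + rewrite hYs. unfold m; apply Rmax_r.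
          - intros k [C [_ [LC [_ Cov]]]]. destruct (Cov y1) as [c [Hc _]]. left; auto.
            destruct C; simpl in *; [contradiction|lia]. }
        apply (cov_unique _ _ _ _ _ (cov_spec _ _ _ _ (proj1 HN)) HN). }
      pose proof (H W Z m cW cZ Hm) as E. rewrite e1, e2 in E. simpl in E.
      set (L := (x1, y1) :: (x1, y2) :: (x2, y1) :: (x2, y2) :: nil).
      destruct (list_net d (setX W Z) m L) as [Hn _].
      { intros c Hc. unfold L in Hc; simpl in Hc.
        unfold setX, W, Z; destruct Hc as [<-|[<-|[<-|[<-|[]]]]]; simpl; tauto. }
      { intros v Hv. exists v. split.
        - destruct v as [a b]. destruct Hv as [Ha Hb]; simpl in Ha, Hb; destruct Ha as [-> | ->]; destruct Hb as [-> | ->]; unfold L; simpl; tauto.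
        - unfold closed_ball. rewrite (proj2 (hd1 v v) eq_refl). lra. }
      pose proof (cov_spec _ _ _ _ Hn) as [[C [_ [LC [VC Cov]]]] _].
      rewrite E in LC. destruct C as [|[a b] [|]]; simpl in LC; try lia.
      destruct (VC (a, b) (or_introl eq_refl)) as [Ha Hb]. simpl in Ha, Hb.
      assert (K : forall v, setX W Z v -> d v (a, b) <= m).
      { intros v Hv. destruct (Cov v Hv) as [c [[<-|[]] Hc]]. exact Hc. }
      destruct Ha as [-> | ->]; destruct Hb as [-> | ->].
      + pose proof (K (x2, y2) (conj (or_intror eq_refl) (or_intror eq_refl))).
        rewrite hds in H0. lra.
      + pose proof (K (x2, y1) (conj (or_intror eq_refl) (or_introl eq_refl))).
        rewrite <- hswap in H0. lra.
      + pose proof (K (x1, y2) (conj (or_introl eq_refl) (or_intror eq_refl))).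
        rewrite hds, <- hswap in H0. lra.
      + pose proof (K (x1, y1) (conj (or_introl eq_refl) (or_introl eq_refl))).
        lra. }
    intros a b c. pose proof (um_inf dX dY hXu hYu a b c).
    pose proof (hinf a c). pose proof (hinf c b). pose proof (Hle a b).
    eapply Rle_trans; [exact H3|]. eapply Rle_trans; [exact H0|].
    apply Rmax_lub.
    + eapply Rle_trans; [exact H1|]. apply Rmax_l.
    + eapply Rle_trans; [exact H2|]. apply Rmax_r.
Qed.
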